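(* Let $T$ be a complete theory in a countable language with monster model $\mathfrak{C}$, $\alpha$ a countable ordinal and $C\subseteq\mathfrak{C}^{\alpha}$ an $\equiv_{L}^{\alpha}$-class. Suppose $p\subseteq L_{\alpha}(\mathfrak{C})$ is a partial $C$-proper type as witnessed by $\psi$. Suppose $\varphi_{0},\dots,\varphi_{n-1},\psi'\in L_{\alpha}(\mathfrak{C})$ are such that $\bigvee_{i<n}\varphi_{i}\vee\psi'$ covers $C$ and $\psi'\vee\psi$ is not $C$-generic. Then for some $i<n$, $p\cup\{\varphi_{i}\}$ is $C$-proper.
   Context: $L_{\alpha}(\mathfrak{C})$ denotes formulas in variables $(v_{i})_{i<\alpha}$ with parameters from $\mathfrak{C}$. The Lascar graph on $\mathfrak{C}^{\alpha}$ joins two distinct tuples lying on a common infinite indiscernible sequence (over $\emptyset$); $\equiv_{L}^{\alpha}$ has as classes its connected components. $\operatorname{Aut}f_{L}(\mathfrak{C})$ is the group generated by automorphisms of $\mathfrak{C}$ fixing pointwise some small elementary substructure. For $\varphi(x,a)$ and an automorphism $\sigma$, $\sigma(\varphi)=\varphi(x,\sigma(a))$. A formula covers $C$ if every element of $C$ satisfies it. $\varphi$ is $C$-generic if finitely many translates $\sigma(\varphi)$, $\sigma\in\operatorname{Aut}f_{L}(\mathfrak{C})$, have a disjunction covering $C$; $\varphi$ is $C$-weakly generic if $\varphi\vee\psi$ is $C$-generic for some non-$C$-generic $\psi$; a partial type is $C$-(weakly) generic if all its formulas are. A partial type $p$ (a consistent set of formulas) is $C$-proper, witnessed by a non-$C$-generic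 formula $\psi$, if $\varphi\vee\psi$ is $C$-generic for every finite conjunction $\varphi$ of formulas of $p$. *)

(* Defs.v *)
From Stdlib Require Import List Arith Relations Fin.
Import ListNotations.

Record signature := Signature {
  fsym : Type; rsym : Type;
  farity : fsym -> nat; rarity : rsym -> nat }.

Definition countable (X : Type) : Prop :=
  exists f : X -> nat, forall x y, f x = f y -> x = y.

Definition countable_signature (S : signature) : Prop :=
  countable (fsym S) /\ countable (rsym S).

Record structure (S : signature) := Structure {
  carrier :> Type;
  finterp : forall f : fsym S, (Fin.t (farity S f) -> carrier) -> carrier;
  rinterp : forall r : rsym S, (Fin.t (rarity S r) -> carrier) -> Prop }.
Arguments finterp {S} s f args.
Arguments rinterp {S} s r args.

Section Syntax.
Variable S : signature.

Inductive term (P V : Type) : Type :=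
| tvar : V -> term P V
| tpar : P -> term P V
| tapp : forall f : fsym S, (Fin.t (farity S f) -> term P V) -> term P V.

(* Variables are well-scoped: a quantifier extends the variable type by one
   (option V), so [formula P V] has free variables among V only. *)
Inductive formula (P : Type) : Type -> Type :=
| fTrue  : forall V, formula P V
| fFalse : forall V, formula P V
| fEq    : forall V, term P V -> term P V -> formula P V
| fRel   : forall V (r : rsym S), (Fin.t (rarity S r) -> term P V) -> formula P V
| fNot   : forall V, formula P V -> formula P V
| fAnd   : forall V, formula P V -> formula P V -> formula P V
| fOr    : forall V, formula P V -> formula P V -> formula P V
| fAll   : forall V, formula P (option V) -> formula P V
| fEx    : forall V, formula P (option V) -> formula P V.

Fixpoint tmap {P Q V : Type} (g : P -> Q) (t : term P V) : term Q V :=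
  match t with
  | tvar _ _ x => tvar Q V x
  | tpar _ _ c => tpar Q V (g c)
  | tapp _ _ f args => tapp Q V f (fun k => tmap g (args k))
  end.

Fixpoint fmap {P Q : Type} (g : P -> Q) {V : Type} (phi : formula P V)
  : formula Q V :=
  match phi in formula _ V0 return formula Q V0 with
  | fTrue _ V0 => fTrue Q V0
  | fFalse _ V0 => fFalse Q V0
  | fEq _ V0 t1 t2 => fEq Q V0 (tmap g t1) (tmap g t2)
  | fRel _ V0 r args => fRel Q V0 r (fun k => tmap g (args k))
  | fNot _ V0 a => fNot Q V0 (fmap g a)
  | fAnd _ V0 a b => fAnd Q V0 (fmap g a) (fmap g b)
  | fOr _ V0 a b => fOr Q V0 (fmap g a) (fmap g b)
  | fAll _ V0 a => fAll Q V0 (fmap g a)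
  | fEx _ V0 a => fEx Q V0 (fmap g a)
  end.

Definition bigOr {P V : Type} (l : list (formula P V)) : formula P V :=
  fold_right (fOr P V) (fFalse P V) l.
Definition bigAnd {P V : Type} (l : list (formula P V)) : formula P V :=
  fold_right (fAnd P V) (fTrue P V) l.

Variable M : structure S.

Fixpoint eval_term {P V : Type} (pv : P -> M) (v : V -> M) (t : term P V) : M :=
  match t with
  | tvar _ _ x => v x
  | tpar _ _ c => pv c
  | tapp _ _ f args => finterp M f (fun k => eval_term pv v (args k))
  end.

Definition extend {V : Type} (v : V -> M) (m : M) : option V -> M :=
  fun o => match o with Some x => v x | None => m end.

Fixpoint sat {P : Type} (pv : P -> M) {V : Type} (phi : formula P V)
  : (V -> M) -> Prop :=
  match phi in formula _ V0 return (V0 -> M) -> Prop with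
  | fTrue _ _ => fun _ => True
  | fFalse _ _ => fun _ => False
  | fEq _ _ t1 t2 => fun v => eval_term pv v t1 = eval_term pv v t2
  | fRel _ _ r args => fun v => rinterp M r (fun k => eval_term pv v (args k))
  | fNot _ _ a => fun v => ~ sat pv a v
  | fAnd _ _ a b => fun v => sat pv a v /\ sat pv b v
  | fOr _ _ a b => fun v => sat pv a v \/ sat pv b v
  | fAll _ _ a => fun v => forall m : M, sat pv a (extend v m)
  | fEx _ _ a => fun v => exists m : M, sat pv a (extend v m)
  end.

End Syntax.

Arguments tvar {S P V}.
Arguments tpar {S P V}.
Arguments fTrue {S P V}.
Arguments fFalse {S P V}.
Arguments fOr {S P V}.
Arguments fAnd {S P V}.
Arguments fmap {S P Q} g {V}.
Arguments bigOr {S P V}.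
Arguments bigAnd {S P V}.
Arguments sat {S} M {P} pv {V} phi.

Definition noparam {X : Type} (e : Empty_set) : X := match e with end.

Definition card_lt (A B : Type) : Prop :=
  (exists f : A -> B, forall x y, f x = f y -> x = y) /\
  ~ (exists g : B -> A, forall x y, g x = g y -> x = y).

Section Monster.
Variable S : signature.
Variable M : structure S.

Definition automorphism (s : M -> M) : Prop :=
  (exists t : M -> M, (forall x, t (s x) = x) /\ (forall x, s (t x) = x)) /\
  (forall f args, s (finterp M f args) = finterp M f (fun k => s (args k))) /\
  (forall r args, rinterp M r args <-> rinterp M r (fun k => s (args k))).

Definition elementary (N : structure S) (e : N -> M) : Prop :=
  forall phi : formula S N Empty_set,
    sat N (fun c => c) phi noparam <-> sat M e phi noparam.

(* K is a type of cardinality kappa; "small" means cardinality < kappa *)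
Variable K : Type.

Definition kappa_saturated : Prop :=
  forall (X : Type) (e : X -> M), card_lt X K ->
  forall p : formula S X unit -> Prop,
    (forall l : list (formula S X unit), (forall phi, In phi l -> p phi) ->
       exists m : M, forall phi, In phi l -> sat M e phi (fun _ => m)) ->
    exists m : M, forall phi, p phi -> sat M e phi (fun _ => m).

Definition strongly_kappa_homogeneous : Prop :=
  forall (J : Type) (f g : J -> M), card_lt J K ->
    (forall phi : formula S Empty_set J,
        sat M noparam phi f <-> sat M noparam phi g) ->
    exists s, automorphism s /\ forall j, s (f j) = g j.

(* M is a monster model (of its complete theory T = Th(M)) with respect to a
   "big" cardinal kappa = |K| > 2^aleph0 >= |T|. *)
Definition monster : Prop :=
  inhabited M /\ card_lt (nat -> bool) K /\
  kappa_saturated /\ strongly_kappa_homogeneous.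

Definition fixes_small_model (s : M -> M) : Prop :=
  exists (N : structure S) (e : N -> M),
    elementary N e /\ card_lt N K /\ forall x, s (e x) = e x.

Inductive autf : (M -> M) -> Prop :=
| autf_gen s : automorphism s -> fixes_small_model s -> autf s
| autf_id : autf (fun x => x)
| autf_comp s t : autf s -> autf t -> autf (fun x => s (t x))
| autf_inv s t : autf s -> (forall x, t (s x) = x) -> (forall x, s (t x) = x) ->
    autf t.

Variable I : Type.   (* the index set alpha of the tuples *)

Definition strict_linear_order {J : Type} (lt : J -> J -> Prop) : Prop :=
  (forall x, ~ lt x x) /\ (forall x y z, lt x y -> lt y z -> lt x z) /\
  (forall x y, lt x y \/ x = y \/ lt y x).

Definition infinite_type (J : Type) : Prop :=
  exists f : nat -> J, forall x y, f x = f y -> x = y.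

Definition increasing {J : Type} (lt : J -> J -> Prop) {n : nat}
  (js : {k : nat | k < n} -> J) : Prop :=
  forall k l, proj1_sig k < proj1_sig l -> lt (js k) (js l).

Definition indiscernible {J : Type} (lt : J -> J -> Prop) (a : J -> I -> M) : Prop :=
  forall (n : nat) (js ks : {k : nat | k < n} -> J),
    increasing lt js -> increasing lt ks ->
    forall phi : formula S Empty_set ({k : nat | k < n} * I),
      sat M noparam phi (fun ki => a (js (fst ki)) (snd ki)) <->
      sat M noparam phi (fun ki => a (ks (fst ki)) (snd ki)).

Definition lascar_edge (a b : I -> M) : Prop :=
  ~ (forall i, a i = b i) /\
  exists (J : Type) (lt : J -> J -> Prop) (s : J -> I -> M),
    strict_linear_order lt /\ infinite_type J /\ indiscernible lt s /\
    (exists j, forall i, s j i = a i) /\ (exists j, forall i, s j i = b i).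

Definition lascar_equiv : (I -> M) -> (I -> M) -> Prop :=
  clos_refl_trans (I -> M) lascar_edge.

Definition lascar_class (C : (I -> M) -> Prop) : Prop :=
  exists a, forall b, C b <-> lascar_equiv a b.

Variable C : (I -> M) -> Prop.

Definition covers (phi : formula S M I) : Prop :=
  forall c, C c -> sat M (fun x => x) phi c.

Definition generic (phi : formula S M I) : Prop :=
  exists l : list (M -> M), (forall s, In s l -> autf s) /\
    covers (bigOr (map (fun s => fmap s phi) l)).

Definition consistent (p : formula S M I -> Prop) : Prop :=
  forall l : list (formula S M I), (forall phi, In phi l -> p phi) ->
    exists c : I -> M, forall phi, In phi l -> sat M (fun x => x) phi c.

Definition proper_wit (p : formula S M I -> Prop) (psi : formula S M I) : Prop :=
  consistent p /\ ~ generic psi /\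
  forall l : list (formula S M I), (forall phi, In phi l -> p phi) ->
    generic (fOr (bigAnd l) psi).

Definition proper (p : formula S M I -> Prop) : Prop :=
  exists psi, proper_wit p psi.

End Monster.

Arguments automorphism {S} M s.
Arguments elementary {S} M N e.
Arguments kappa_saturated {S} M K.
Arguments strongly_kappa_homogeneous {S} M K.
Arguments monster {S} M K.
Arguments fixes_small_model {S} M K s.
Arguments autf {S} M K _.
Arguments indiscernible {S} M I {J} lt a.
Arguments lascar_edge {S} M I a b.
Arguments lascar_equiv {S} M I _ _.
Arguments lascar_class {S} M I C.
Arguments covers {S} M I C phi.
Arguments generic {S} M K I C phi.
Arguments consistent {S} M I p.
Arguments proper_wit {S} M K I C p psi.
Arguments proper {S} M K I C p.

(* Main.v *)
Require Import Defs.
From Stdlib Require Import List Arith Lia Relations Fin Cantor.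
From Stdlib Require Import Classical FunctionalExtensionality PropExtensionality ClassicalEpsilon ProofIrrelevance.
Import ListNotations.
From mathcomp Require classical_sets filter.
Unset Asymmetric Patterns.

Section Syn.
Variable S : signature.

Fixpoint tren {P V W : Type} (f : V -> W) (t : term S P V) : term S P W :=
  match t with
  | @tvar _ _ _ x => tvar (f x)
  | @tpar _ _ _ c => tpar c
  | tapp _ _ _ g args => tapp S P W g (fun k => tren f (args k))
  end.

Fixpoint tsub {P V W : Type} (s : V -> term S P W) (t : term S P V) : term S P W :=
  match t with
  | @tvar _ _ _ x => s x
  | @tpar _ _ _ c => tpar c
  | tapp _ _ _ g args => tapp S P W g (fun k => tsub s (args k))
  end.

Definition lift {P V W : Type} (s : V -> term S P W) : option V -> term S P (option W) :=
  fun o => match o with None => tvar None | Some x => tren Some (s x) end.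

Fixpoint fsub {P V : Type} (phi : formula S P V) : forall W : Type, (V -> term S P W) -> formula S P W :=
  match phi in formula _ _ V0 return forall W : Type, (V0 -> term S P W) -> formula S P W with
  | @fTrue _ _ _ => fun W _ => fTrue
  | @fFalse _ _ _ => fun W _ => fFalse
  | fEq _ _ _ t1 t2 => fun W s => fEq S P W (tsub s t1) (tsub s t2)
  | fRel _ _ _ r args => fun W s => fRel S P W r (fun k => tsub s (args k))
  | fNot _ _ _ a => fun W s => fNot S P W (fsub a W s)
  | @fAnd _ _ _ a b => fun W s => fAnd (fsub a W s) (fsub b W s)
  | @fOr _ _ _ a b => fun W s => fOr (fsub a W s) (fsub b W s)
  | fAll _ _ _ a => fun W s => fAll S P W (fsub a (option W) (lift s))
  | fEx _ _ _ a => fun W s => fEx S P W (fsub a (option W) (lift s))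
  end.

Variable M : structure S.

Lemma eval_tren {P V W} (pv : P -> M) (f : V -> W) (w : W -> M) t :
  eval_term S M pv w (tren f t) = eval_term S M pv (fun x => w (f x)) t.
Proof.
  induction t; simpl; auto. f_equal. apply functional_extensionality; auto.
Qed.

Lemma eval_tsub {P V W} (pv : P -> M) (s : V -> term S P W) (w : W -> M) t :
  eval_term S M pv w (tsub s t) = eval_term S M pv (fun x => eval_term S M pv w (s x)) t.
Proof.
  induction t; simpl; auto. f_equal. apply functional_extensionality; auto.
Qed.

Lemma sat_fsub {P V} (pv : P -> M) (phi : formula S P V) :
  forall W (s : V -> term S P W) (w : W -> M),
  sat M pv (fsub phi W s) w <-> sat M pv phi (fun x => eval_term S M pv w (s x)).
Proof.
  induction phi; intros W s w; simpl; try tauto.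
  - rewrite !eval_tsub; tauto.
  - assert (E : (fun k => eval_term S M pv w (tsub s (t k))) =
                (fun k => eval_term S M pv (fun x => eval_term S M pv w (s x)) (t k))).
    { apply functional_extensionality; intro; apply eval_tsub. }
    rewrite E; tauto.
  - rewrite IHphi; tauto.
  - rewrite IHphi1, IHphi2; tauto.
  - rewrite IHphi1, IHphi2; tauto.
  - split; intros H m; specialize (H m); rewrite IHphi in *;
    (replace (fun x : option V => eval_term S M pv (extend S M w m) (lift s x))
       with (extend S M (fun x => eval_term S M pv w (s x)) m) in *;
     [exact H | apply functional_extensionality; intros [x|]; simpl;
       [rewrite eval_tren; reflexivity | reflexivity]]).
  - split; intros [m H]; exists m; rewrite IHphi in *;
    (replace (fun x : option V => eval_term S M pv (extend S M w m) (lift s x))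
       with (extend S M (fun x => eval_term S M pv w (s x)) m) in *;
     [exact H | apply functional_extensionality; intros [x|]; simpl;
       [rewrite eval_tren; reflexivity | reflexivity]]).
Qed.

Lemma eval_tmap {P Q V} (g : P -> Q) (pv : Q -> M) (v : V -> M) t :
  eval_term S M pv v (tmap S g t) = eval_term S M (fun x => pv (g x)) v t.
Proof.
  induction t; simpl; auto. f_equal. apply functional_extensionality; auto.
Qed.

Lemma sat_fmap {P Q V} (g : P -> Q) (pv : Q -> M) (phi : formula S P V) :
  forall v, sat M pv (fmap g phi) v <-> sat M (fun x => pv (g x)) phi v.
Proof.
  induction phi; intro v; simpl; try tauto.
  - rewrite !eval_tmap; tauto.
  - replace (fun k => eval_term S M pv v (tmap S g (t k))) with
      (fun k => eval_term S M (fun x => pv (g x)) v (t k)); [tauto|].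
    apply functional_extensionality; intro; symmetry; apply eval_tmap.
  - rewrite IHphi; tauto.
  - rewrite IHphi1, IHphi2; tauto.
  - rewrite IHphi1, IHphi2; tauto.
  - split; intros H m; apply IHphi; apply H.
  - split; intros [m H]; exists m; apply IHphi; apply H.
Qed.

Lemma eval_aut (s : M -> M) (hs : automorphism M s) {P V} (pv : P -> M) (v : V -> M) t :
  eval_term S M (fun x => s (pv x)) (fun x => s (v x)) t = s (eval_term S M pv v t).
Proof.
  destruct hs as [_ [Hf _]].
  induction t; simpl; auto. rewrite Hf. f_equal. apply functional_extensionality; auto.
Qed.

Lemma sat_aut (s : M -> M) (hs : automorphism M s) {P V} (pv : P -> M) (phi : formula S P V) :
  forall v, sat M (fun x => s (pv x)) phi (fun x => s (v x)) <-> sat M pv phi v.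
Proof.
  pose proof hs as hs'. destruct hs' as [[t [Hts Hst]] [Hf Hr]].
  induction phi; intro v; simpl; try tauto.
  - rewrite !(eval_aut s hs). split; intro H; [|congruence].
    rewrite <- (Hts (eval_term S M pv v t0)), <- (Hts (eval_term S M pv v t1)), H; auto.
  - replace (fun k => eval_term S M (fun x => s (pv x)) (fun x => s (v x)) (t0 k)) with
      (fun k => s (eval_term S M pv v (t0 k))).
    + symmetry; apply Hr.
    + apply functional_extensionality; intro; symmetry; apply (eval_aut s hs).
  - rewrite IHphi; tauto.
  - rewrite IHphi1, IHphi2; tauto.
  - rewrite IHphi1, IHphi2; tauto.
  - split; intros H m.
    + apply IHphi. replace (fun x => s (extend S M v m x)) with (extend S M (fun x => s (v x)) (s m)); [apply H|].
      apply functional_extensionality; intros [x|]; reflexivity.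
    + specialize (H (t m)). apply IHphi in H.
      replace (extend S M (fun x => s (v x)) m) with (fun x => s (extend S M v (t m) x)); [exact H|].
      apply functional_extensionality; intros [x|]; simpl; auto.
  - split; intros [m H].
    + exists (t m). apply IHphi.
      replace (fun x => s (extend S M v (t m) x)) with (extend S M (fun x => s (v x)) m); [exact H|].
      apply functional_extensionality; intros [x|]; simpl; auto.
    + exists (s m). apply IHphi in H.
      replace (extend S M (fun x => s (v x)) (s m)) with (fun x => s (extend S M v m x)); [exact H|].
      apply functional_extensionality; intros [x|]; reflexivity.
Qed.

End Syn.

Fixpoint fin_all (n : nat) : list (Fin.t n) :=
  match n with 0 => [] | S n' => Fin.F1 :: map Fin.FS (fin_all n') end.

Lemma fin_all_in n (k : Fin.t n) : In k (fin_all n).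
Proof.
  induction k; simpl; auto. right. apply in_map; auto.
Qed.

Fixpoint somes {V} (l : list (option V)) : list V :=
  match l with [] => [] | Some x :: l' => x :: somes l' | None :: l' => somes l' end.

Lemma somes_in {V} (l : list (option V)) x : In (Some x) l -> In x (somes l).
Proof.
  induction l as [|[y|] l IH]; simpl; intros H; auto.
  - destruct H as [H|H]; [left; congruence|right; auto].
  - destruct H as [H|H]; [discriminate|auto].
Qed.

Section FV.
Variable S : signature.

Fixpoint tfv {P V} (t : term S P V) : list V :=
  match t with
  | @tvar _ _ _ x => [x]
  | @tpar _ _ _ _ => []
  | tapp _ _ _ g args => flat_map (fun k => tfv (args k)) (fin_all _)
  end.

Fixpoint fv {P V} (phi : formula S P V) : list V :=
  match phi in formula _ _ V0 return list V0 with
  | @fTrue _ _ _ => []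
  | @fFalse _ _ _ => []
  | fEq _ _ _ t1 t2 => tfv t1 ++ tfv t2
  | fRel _ _ _ r args => flat_map (fun k => tfv (args k)) (fin_all _)
  | fNot _ _ _ a => fv a
  | @fAnd _ _ _ a b => fv a ++ fv b
  | @fOr _ _ _ a b => fv a ++ fv b
  | fAll _ _ _ a => somes (fv a)
  | fEx _ _ _ a => somes (fv a)
  end.

Variable M : structure S.

Lemma eval_fv {P V} (pv : P -> M) (v w : V -> M) t :
  (forall x, In x (tfv t) -> v x = w x) -> eval_term S M pv v t = eval_term S M pv w t.
Proof.
  induction t as [| |g args IHa]; simpl; intro Hv; auto.
  f_equal. apply functional_extensionality; intro k. apply IHa.
  intros x Hx; apply Hv. apply in_flat_map. exists k; split; auto using fin_all_in.
Qed.

Lemma sat_fv {P V} (pv : P -> M) (phi : formula S P V) :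
  forall (v w : V -> M), (forall x, In x (fv phi) -> v x = w x) ->
  (sat M pv phi v <-> sat M pv phi w).
Proof.
  induction phi; intros v w H; simpl in *; try tauto.
  - rewrite (eval_fv pv v w t), (eval_fv pv v w t0); try tauto;
      intros; apply H; apply in_or_app; auto.
  - replace (fun k => eval_term S M pv v (t k)) with (fun k => eval_term S M pv w (t k)); [tauto|].
    apply functional_extensionality; intro k; symmetry; apply eval_fv.
    intros x Hx; apply H; apply in_flat_map; exists k; split; auto using fin_all_in.
  - rewrite (IHphi v w H); tauto.
  - rewrite (IHphi1 v w), (IHphi2 v w); try tauto; intros; apply H; apply in_or_app; auto.
  - rewrite (IHphi1 v w), (IHphi2 v w); try tauto; intros; apply H; apply in_or_app; auto.
  - assert (E : forall m, sat M pv phi (extend S M v m) <-> sat M pv phi (extend S M w m)).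
    { intro m; apply IHphi. intros [x|] Hx; simpl; auto. apply H, somes_in; auto. }
    split; intros H' m; apply E; auto; apply H'.
  - assert (E : forall m, sat M pv phi (extend S M v m) <-> sat M pv phi (extend S M w m)).
    { intro m; apply IHphi. intros [x|] Hx; simpl; auto. apply H, somes_in; auto. }
    split; intros [m H']; exists m; apply E; auto.
Qed.

Section Close.
Context {P V : Type} (dec : forall x y : V, {x = y} + {x <> y}).

Definition upd (v : V -> M) (x : V) (m : M) : V -> M :=
  fun y => if dec y x then m else v y.

Definition exClose1 (x : V) (phi : formula S P V) : formula S P V :=
  fEx S P V (fsub S phi (option V) (fun y => if dec y x then @tvar S P (option V) None else @tvar S P (option V) (Some y))).

Lemma sat_exClose1 pv x phi v :
  sat M pv (exClose1 x phi) v <-> exists m, sat M pv phi (upd v x m).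
Proof.
  unfold exClose1; simpl.
  assert (E : forall m, (fun y => eval_term S M pv (extend S M v m)
                  (if dec y x then tvar None else tvar (Some y))) = upd v x m).
  { intro m; apply functional_extensionality; intro y; unfold upd.
    destruct (dec y x); reflexivity. }
  split; intros [m H]; exists m.
  - rewrite sat_fsub, E in H; exact H.
  - rewrite sat_fsub, E; exact H.
Qed.

Definition exClose (L : list V) (phi : formula S P V) : formula S P V :=
  fold_right exClose1 phi L.

Lemma sat_exClose pv L phi : forall v,
  sat M pv (exClose L phi) v <->
  exists u, (forall y, ~ In y L -> u y = v y) /\ sat M pv phi u.
Proof.
  induction L as [|x L IH]; intro v.
  - simpl; split; [intro H; exists v; auto|intros [u [Hu H]]].
    replace v with u; auto. apply functional_extensionality; intro; apply Hu; auto.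
  - change (sat M pv (exClose1 x (exClose L phi)) v <-> exists u, (forall y, ~ In y (x :: L) -> u y = v y) /\ sat M pv phi u).
    rewrite sat_exClose1. split.
    + intros [m H]. apply IH in H. destruct H as [u [Hu H]]. exists u; split; auto.
      intros y Hy. rewrite Hu by (intro; apply Hy; right; auto). unfold upd. destruct (dec y x) as [e|e]; [exfalso; apply Hy; left; auto|reflexivity].
    + intros [u [Hu H]]. exists (u x). apply IH. exists u; split; auto.
      intros y Hy. unfold upd. destruct (dec y x); subst; auto.
      apply Hu. intros [?|?]; auto.
Qed.

Lemma sat_exClose_fv pv phi v :
  sat M pv (exClose (fv phi) phi) v <-> exists u, sat M pv phi u.
Proof.
  rewrite sat_exClose. split; [intros [u [_ H]]; eauto|intros [u H]].
  exists (fun y => if in_dec dec y (fv phi) then u y else v y). split.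
  - intros y Hy; destruct (in_dec dec y (fv phi)); tauto.
  - revert H; apply sat_fv. intros x Hx. destruct (in_dec dec x (fv phi)); tauto.
Qed.
End Close.
End FV.

Definition inj {A B} (f : A -> B) := forall x y, f x = f y -> x = y.

Lemma cantor (F : (nat -> bool) -> nat) : ~ inj F.
Proof.
  intro HF.
  set (G := fun n => match excluded_middle_informative (exists f, F f = n) with
                     | left H => proj1_sig (constructive_indefinite_description _ H)
                     | right _ => fun _ => false end).
  assert (HG : forall f, G (F f) = f).
  { intro f. unfold G. destruct (excluded_middle_informative _) as [H|H].
    - destruct (constructive_indefinite_description _ H) as [g Hg]; simpl. apply HF; auto.
    - exfalso; apply H; eauto. }
  set (d := fun k => negb (G k k)).
  pose proof (f_equal (fun g => g (F d)) (HG d)) as E. simpl in E.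
  assert (E2 : d (F d) = negb (d (F d))).
  { unfold d at 1. rewrite E. reflexivity. }
  destruct (d (F d)); discriminate.
Qed.

Lemma finite_or_inf (X : Type) :
  (exists g : X -> nat, inj g) \/ (exists f : nat -> X, inj f).
Proof.
  destruct (classic (forall l : list X, exists x, ~ In x l)) as [H|H].
  - right.
    set (fr := fun l => proj1_sig (constructive_indefinite_description _ (H l))).
    assert (Hfr : forall l, ~ In (fr l) l).
    { intro l; unfold fr; destruct (constructive_indefinite_description _ _); auto. }
    set (F := fix F n := match n with 0 => [] | S n => fr (F n) :: F n end).
    exists (fun n => fr (F n)).
    assert (Hin : forall m n, m < n -> In (fr (F m)) (F n)).
    { intros m n; induction n; intro Hmn; [lia|]. simpl.
      destruct (Nat.eq_dec m n); [subst; left; auto|right; apply IHn; lia]. }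
    intros m n E. destruct (Nat.lt_trichotomy m n) as [h|[h|h]]; auto.
    + exfalso; apply (Hfr (F n)); rewrite <- E; apply Hin; auto.
    + exfalso; apply (Hfr (F m)); rewrite E; apply Hin; auto.
  - left. apply not_all_ex_not in H. destruct H as [l Hl].
    assert (Hall : forall x, exists n, nth_error l n = Some x).
    { intro x. destruct (classic (In x l)) as [h|h].
      - apply In_nth_error; auto.
      - exfalso; apply Hl; eauto. }
    exists (fun x => proj1_sig (constructive_indefinite_description _ (Hall x))).
    intros x y E.
    destruct (constructive_indefinite_description _ (Hall x)) as [n Hn].
    destruct (constructive_indefinite_description _ (Hall y)) as [n' Hn'].
    simpl in E; subst. congruence.
Qed.

Lemma inj_comp {A B C} (f : A -> B) (g : B -> C) : inj f -> inj g -> inj (fun x => g (f x)).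
Proof. intros hf hg x y E; auto. Qed.

Lemma card_sum (X Y K : Type) :
  card_lt X K -> card_lt (nat -> bool) K -> (exists h : Y -> nat, inj h) ->
  card_lt (X + Y) K.
Proof.
  intros [[fX hfX] nX] [[fB hfB] nB] [h hh].
  destruct (finite_or_inf X) as [[g hg]|[f hf]].
  - set (c := fun s : X + Y => match s with inl x => 2 * g x | inr y => 2 * h y + 1 end).
    assert (hc : inj c).
    { intros [x|y] [x'|y'] E; simpl in E; try lia.
      - f_equal; apply hg; lia.
      - f_equal; apply hh; lia. }
    set (e := fun n : nat => fun k => Nat.eqb k n).
    assert (he : inj e).
    { intros n m E. pose proof (f_equal (fun q => q n) E) as E'; unfold e in E'; simpl in E'.
      rewrite Nat.eqb_refl in E'. symmetry in E'. apply Nat.eqb_eq in E'; auto. }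
    split.
    + exists (fun s => fB (e (c s))). intros a b E; apply hc, he, hfB; auto.
    + intros [k hk]. apply (cantor (fun q => c (k (fB q)))).
      intros a b E; apply hfB, hk, hc; auto.
  - set (sh := fun s : X + Y =>
      match s with
      | inl x => match excluded_middle_informative (exists k, f k = x) with
                 | left H => f (2 * proj1_sig (constructive_indefinite_description _ H))
                 | right _ => x end
      | inr y => f (2 * h y + 1) end).
    assert (hsh : inj sh).
    { intros [x|y] [x'|y'] E; simpl in E.
      - destruct (excluded_middle_informative (exists k, f k = x)) as [H|H];
        destruct (excluded_middle_informative (exists k, f k = x')) as [H'|H'].
        + destruct (constructive_indefinite_description _ H) as [k Hk].
          destruct (constructive_indefinite_description _ H') as [k' Hk']. simpl in E.
          apply hf in E. f_equal. subst. f_equal. lia.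
        + exfalso; apply H'; eauto.
        + exfalso; apply H; eauto.
        + f_equal; auto.
      - destruct (excluded_middle_informative (exists k, f k = x)) as [H|H].
        + destruct (constructive_indefinite_description _ H) as [k Hk]. simpl in E.
          apply hf in E; lia.
        + exfalso; apply H; eauto.
      - destruct (excluded_middle_informative (exists k, f k = x')) as [H|H].
        + destruct (constructive_indefinite_description _ H) as [k Hk]. simpl in E.
          apply hf in E; lia.
        + exfalso; apply H; eauto.
      - apply hf in E. f_equal. apply hh. lia. }
    split.
    + exists (fun s => fX (sh s)). intros a b E; apply hsh, hfX; auto.
    + intros [k hk]. apply nX. exists (fun q => sh (k q)). intros a b E; apply hk, hsh; auto.
Qed.

Section D.
Variable Sg : signature.

Lemma sat_bigAnd (M : structure Sg) {P V} (pv : P -> M) (l : list (formula Sg P V)) v :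
  sat M pv (bigAnd l) v <-> forall phi, In phi l -> sat M pv phi v.
Proof.
  induction l as [|a l IH]; simpl.
  - split; auto; intros _ _ [].
  - rewrite IH. split.
    + intros [Ha Hl] phi [<-|H]; auto.
    + intros H; split; auto.
Qed.

Lemma sat_bigOr (M : structure Sg) {P V} (pv : P -> M) (l : list (formula Sg P V)) v :
  sat M pv (bigOr l) v <-> exists phi, In phi l /\ sat M pv phi v.
Proof.
  induction l as [|a l IH]; simpl.
  - split; [intros []|intros [? [[] _]]].
  - rewrite IH. split.
    + intros [Ha|[phi [H1 H2]]]; eauto.
    + intros [phi [[<-|H1] H2]]; eauto.
Qed.

Lemma gen_elem (M N : structure Sg) (e : N -> M) (he : elementary M N e)
  {V} (phi : formula Sg N V) (n : V -> N) :
  sat N (fun c => c) phi n <-> sat M e phi (fun x => e (n x)).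
Proof.
  pose proof (he (fsub Sg phi Empty_set (fun x => tpar (n x)))) as H.
  rewrite !sat_fsub in H. simpl in H. exact H.
Qed.

Section Sat.
Variables (M : structure Sg) (K : Type).
Hypothesis hsat : kappa_saturated M K.
Hypothesis hB : card_lt (nat -> bool) K.
Variables (I : Type) (code : I -> nat) (hcode : inj code) (m0 : M).

Definition decI (x y : I) : {x = y} + {x <> y} :=
  match Nat.eq_dec (code x) (code y) with
  | left h => left (hcode _ _ h)
  | right h => right (fun e => h (f_equal code e)) end.

Variables (X : Type) (f : X -> M) (hX : card_lt X K) (Tp : formula Sg X I -> Prop).
Hypothesis fs : forall l, (forall phi, In phi l -> Tp phi) ->
  exists v, forall phi, In phi l -> sat M f phi v.

Definition Inv (k : nat) (w : I -> M) : Prop :=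
  forall l, (forall phi, In phi l -> Tp phi) ->
  exists v, (forall i, code i < k -> v i = w i) /\ forall phi, In phi l -> sat M f phi v.

Lemma sub_all {T} (gs : list T) (R : T -> list (formula Sg X I) -> Prop) :
  (forall g, In g gs -> exists l, (forall phi, In phi l -> Tp phi) /\ R g l) ->
  exists lt, (forall phi, In phi lt -> Tp phi) /\
    forall g, In g gs -> exists l, (forall phi, In phi l -> In phi lt) /\ R g l.
Proof.
  induction gs as [|g gs IH]; intro H.
  - exists []; split; [intros _ []|intros _ []].
  - destruct IH as [lt [H1 H2]]; [intros; apply H; right; auto|].
    destruct (H g (or_introl eq_refl)) as [l [Hl Rl]].
    exists (l ++ lt); split.
    + intros phi Hp; apply in_app_or in Hp; destruct Hp; auto.
    + intros g' [<-|Hg'].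
      * exists l; split; auto; intros; apply in_or_app; auto.
      * destruct (H2 g' Hg') as [l' [Hl' R']]. exists l'; split; auto.
        intros; apply in_or_app; auto.
Qed.

Lemma inv_step k w : Inv k w -> exists w', Inv (Datatypes.S k) w' /\ forall i, code i < k -> w' i = w i.
Proof.
  intro Hw.
  destruct (classic (exists i, code i = k)) as [[i Hi]|Hno].
  2:{ exists w; split; auto. intros l Hl. destruct (Hw l Hl) as [v [Hv1 Hv2]].
      exists v; split; auto. intros j Hj. apply Hv1.
      destruct (Nat.eq_dec (code j) k); [exfalso; apply Hno; eauto|lia]. }
  set (g := fun s : X + I => match s with inl x => f x | inr j => w j end).
  set (sg := fun j : I => if decI j i then @tvar Sg (X + I) unit tt else @tpar Sg (X + I) unit (inr j)).
  set (L := fun l : list (formula Sg X I) => filter (fun j => k <? code j) (fv Sg (bigAnd l))).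
  set (gam := fun l => fsub Sg (fmap inl (exClose Sg decI (L l) (bigAnd l))) unit sg).
  set (nu := fun m => upd Sg M decI w i m).
  assert (Hg : forall l m, sat M g (gam l) (fun _ => m) <->
     exists u, (forall y, ~ In y (L l) -> u y = nu m y) /\ sat M f (bigAnd l) u).
  { intros l m. unfold gam. rewrite sat_fsub, sat_fmap.
    replace (fun j => eval_term Sg M g (fun _ : unit => m) (sg j)) with (nu m).
    - apply sat_exClose.
    - apply functional_extensionality; intro j. unfold nu, upd, sg. destruct (decI j i); reflexivity. }
  assert (HL : forall l y, In y (L l) -> k < code y).
  { intros l y Hy. unfold L in Hy. apply filter_In in Hy. destruct Hy as [_ Hy].
    apply Nat.ltb_lt; auto. }
  set (Gam := fun gm => exists l, (forall phi, In phi l -> Tp phi) /\ gm = gam l).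
  assert (FS : forall gs, (forall gm, In gm gs -> Gam gm) ->
     exists m, forall gm, In gm gs -> sat M g gm (fun _ => m)).
  { intros gs Hgs.
    destruct (sub_all gs (fun gm l => gm = gam l) Hgs) as [lt [Hlt Hsub]].
    destruct (Hw lt Hlt) as [v [Hv1 Hv2]].
    exists (v i). intros gm Hgm. destruct (Hsub gm Hgm) as [l [Hl ->]].
    apply Hg. exists (fun y => if in_dec decI y (L l) then v y else nu (v i) y). split.
    - intros y Hy. destruct (in_dec decI y (L l)); tauto.
    - apply (sat_fv Sg M f (bigAnd l) v).
      + intros x Hx. destruct (in_dec decI x (L l)) as [h|h]; auto.
        unfold nu, upd. destruct (decI x i) as [e|e]; [subst; auto|].
        assert (code x <= k).
        { destruct (le_lt_dec (code x) k) as [?|h']; auto. exfalso; apply h.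
          unfold L. apply filter_In; split; auto. apply Nat.ltb_lt; auto. }
        assert (code x <> k). { intro E. apply e. apply hcode. congruence. }
        apply Hv1; lia.
      + apply sat_bigAnd. intros phi Hphi; apply Hv2; auto. }
  assert (HXI : card_lt (X + I) K).
  { apply card_sum; auto. exists code; auto. }
  destruct (hsat (sum X I) g HXI Gam FS) as [m Hm].
  exists (nu m). split.
  - intros l Hl. assert (H := Hm (gam l) (ex_intro _ l (conj Hl eq_refl))).
    apply Hg in H. destruct H as [u [Hu1 Hu2]]. exists u. split.
    + intros j Hj. apply Hu1. intro Hin. apply HL in Hin. lia.
    + apply sat_bigAnd; auto.
  - intros j Hj. unfold nu, upd. destruct (decI j i); auto. subst; lia.
Qed.


Definition stepf (k : nat) (w : I -> M) : I -> M :=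
  proj1_sig (constructive_indefinite_description
    (fun w' => Inv k w -> Inv (Datatypes.S k) w' /\ forall i, code i < k -> w' i = w i)
    (match classic (Inv k w) with
     | or_introl h => match inv_step k w h with ex_intro _ w' hw' => ex_intro _ w' (fun _ => hw') end
     | or_intror h => ex_intro _ w (fun h' => match h h' with end) end)).

Fixpoint Wseq (k : nat) : I -> M :=
  match k with 0 => fun _ => m0 | Datatypes.S k' => stepf k' (Wseq k') end.

Lemma Wseq_spec k : Inv k (Wseq k) /\ (forall i, code i < k -> Wseq (Datatypes.S k) i = Wseq k i).
Proof.
  induction k as [|k [IH1 IH2]].
  - split.
    + intros l Hl. destruct (fs l Hl) as [v Hv]. exists v; split; auto. intros; lia.
    + simpl. unfold stepf. destruct (constructive_indefinite_description _ _) as [w' Hw'].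
      simpl. intros; lia.
  - assert (H : Inv (Datatypes.S k) (Wseq (Datatypes.S k))).
    { simpl. unfold stepf. destruct (constructive_indefinite_description _ _) as [w' Hw'].
      simpl. apply Hw'; auto. }
    split; auto.
    change (Wseq (Datatypes.S (Datatypes.S k))) with (stepf (Datatypes.S k) (Wseq (Datatypes.S k))).
    unfold stepf. destruct (constructive_indefinite_description _ _) as [w' Hw'].
    simpl. apply Hw'; auto.
Qed.

Lemma Wseq_stable j : forall k, code j < k -> Wseq k j = Wseq (Datatypes.S (code j)) j.
Proof.
  induction k; intro h; [lia|].
  destruct (Nat.eq_dec (code j) k) as [e|e]; [subst; auto|].
  rewrite (proj2 (Wseq_spec k)) by lia. apply IHk; lia.
Qed.

Lemma in_le_max (l : list nat) x : In x l -> x <= list_max l.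
Proof. induction l; simpl; [intros []|]; intros [h|h]; subst; try lia; specialize (IHl h); lia. Qed.

Lemma sat_I : exists v, forall phi, Tp phi -> sat M f phi v.
Proof.
  exists (fun j => Wseq (Datatypes.S (code j)) j). intros phi Hphi.
  set (k := Datatypes.S (list_max (map code (fv Sg phi)))).
  destruct (proj1 (Wseq_spec k) [phi]) as [v [Hv1 Hv2]].
  - intros p [<-|[]]; auto.
  - assert (Hs := Hv2 phi (or_introl eq_refl)).
    revert Hs; apply sat_fv. intros x Hx.
    assert (code x < k).
    { unfold k. assert (code x <= list_max (map code (fv Sg phi))); [|lia].
      apply in_le_max. apply in_map; auto. }
    rewrite Hv1 by auto. symmetry; apply Wseq_stable; auto.
Qed.
End Sat.
End D.

Lemma ultra_exists (T : Type) (B : (T -> Prop) -> Prop)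
  (hB : forall l : list (T -> Prop), (forall A, In A l -> B A) -> exists x, forall A, In A l -> A x) :
  exists U : (T -> Prop) -> Prop,
    (forall A, B A -> U A) /\
    (forall A A', U A -> U A' -> U (fun x => A x /\ A' x)) /\
    (forall A, U A -> exists x, A x) /\
    (forall A, U A \/ U (fun x => ~ A x)) /\
    (forall A A', (forall x, A x -> A' x) -> U A -> U A').
Proof.
  set (F := fun A : T -> Prop => exists l, (forall X, In X l -> B X) /\ forall x, (forall X, In X l -> X x) -> A x).
  assert (FF : filter.ProperFilter F).
  { constructor.
    - intros [l [Hl H]]. destruct (hB l Hl) as [x Hx]. exact (H x Hx).
    - constructor.
      + exists []. split; [intros _ []|]. intros; exact I.
      + intros A A' [l [Hl H]] [l' [Hl' H']]. exists (l ++ l'). split.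
        * intros X HX; apply in_app_or in HX; destruct HX; auto.
        * intros x Hx. hnf. split; [apply H|apply H']; intros; apply Hx; apply in_or_app; auto.
      + intros A A' HAA [l [Hl H]]. exists l; split; [auto|]. intros x Hx; apply HAA, H, Hx. }
  destruct (filter.ultraFilterLemma FF) as [G [UG sFG]].
  exists G. split; [|split; [|split; [|split]]].
  - intros A HA. apply sFG. exists [A]. split.
    + intros X [<-|[]]; auto.
    + intros x Hx; apply Hx; left; auto.
  - intros A A' HA HA'. exact (@filter.filterI _ G _ A A' HA HA').
  - intros A HA. destruct (classic (exists x, A x)) as [h|h]; auto.
    exfalso. apply (@filter.filter_not_empty _ G _).
    replace classical_sets.set0 with A; auto.
    apply functional_extensionality; intro x; apply propositional_extensionality.
    split; [intro hx; apply h; eauto|intros []].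
  - intro A. exact (filter.in_ultra_setVsetC A UG).
  - intros A A' H HA. exact (@filter.filterS _ G _ A A' H HA).
Qed.

Section F.
Variables (Sg : signature) (M : structure Sg) (K : Type).
Hypothesis hsat : kappa_saturated M K.
Hypothesis hB : card_lt (nat -> bool) K.
Variables (I : Type) (code : I -> nat) (hcode : inj code) (m0 : M).
Variables (N : structure Sg) (e : N -> M) (he : elementary M N e) (hNK : card_lt N K).
Variable (a : I -> M).

Definition D {X} (f : X -> M) (phi : formula Sg X I) : (I -> N) -> Prop :=
  fun n => sat M f phi (fun i => e (n i)).

Definition Bset (A : (I -> N) -> Prop) : Prop :=
  exists phi : formula Sg N I, sat M e phi a /\ A = D e phi.

Lemma N_inh : exists n0 : N, True.
Proof.
  assert (H : sat M e (fEx Sg N Empty_set (@fTrue Sg N (option Empty_set))) noparam).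
  { simpl. exists m0; auto. }
  apply he in H. simpl in H. destruct H as [n0 _]. eauto.
Qed.

Lemma Bset_fip : forall l : list ((I -> N) -> Prop), (forall A, In A l -> Bset A) ->
  exists x, forall A, In A l -> A x.
Proof.
  intros l Hl.
  assert (H : exists lp, (forall phi, In phi lp -> sat M e phi a) /\
             forall A, In A l -> exists phi, In phi lp /\ A = D e phi).
  { induction l as [|A l IH].
    - exists []; split; intros _ [].
    - destruct IH as [lp [H1 H2]]; [intros; apply Hl; right; auto|].
      destruct (Hl A (or_introl eq_refl)) as [phi [Hphi ->]].
      exists (phi :: lp); split.
      + intros p [<-|Hp]; auto.
      + intros A' [<-|HA']; [exists phi; split; auto; left; auto|].
        destruct (H2 A' HA') as [p [Hp ->]]. exists p; split; auto; right; auto. }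
  destruct H as [lp [H1 H2]].
  destruct N_inh as [n0 _].
  set (psi := bigAnd lp).
  assert (Hc : sat M e (exClose Sg (decI I code hcode) (fv Sg psi) psi) (fun _ => e n0)).
  { apply sat_exClose_fv. exists a. apply sat_bigAnd; auto. }
  apply (gen_elem Sg M N e he _ (fun _ : I => n0)) in Hc.
  apply sat_exClose_fv in Hc. destruct Hc as [u Hu].
  apply (gen_elem Sg M N e he) in Hu.
  exists u. intros A HA. destruct (H2 A HA) as [phi [Hphi ->]].
  unfold D. apply (proj1 (sat_bigAnd Sg M e lp _) Hu); auto.
Qed.

Variable U : ((I -> N) -> Prop) -> Prop.
Hypothesis UB : forall A, Bset A -> U A.
Hypothesis UI : forall A A', U A -> U A' -> U (fun x => A x /\ A' x).
Hypothesis Une : forall A, U A -> exists x, A x.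
Hypothesis Uult : forall A, U A \/ U (fun x => ~ A x).
Hypothesis Umon : forall A A', (forall x, A x -> A' x) -> U A -> U A'.

Lemma UT : U (fun _ => True).
Proof.
  destruct (Uult (fun _ => False)) as [h|h].
  - destruct (Une _ h) as [_ []].
  - revert h; apply Umon; auto.
Qed.

Definition realizes {X} (f : X -> M) (c : I -> M) : Prop :=
  forall phi : formula Sg X I, U (D f phi) -> sat M f phi c.

Lemma realizes_iff {X} (f : X -> M) c : realizes f c ->
  forall phi, sat M f phi c <-> U (D f phi).
Proof.
  intros Hc phi. split; auto.
  intro Hs. destruct (Uult (D f phi)) as [h|h]; auto.
  exfalso. apply (Hc (fNot Sg X I phi) h). exact Hs.
Qed.

Lemma realize_ex {X} (f : X -> M) : card_lt X K -> exists c, realizes f c.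
Proof.
  intro hX.
  destruct (sat_I Sg M K hsat hB I code hcode m0 X f hX (fun phi => U (D f phi))) as [c Hc].
  - intros l Hl.
    assert (H : U (fun n => forall phi, In phi l -> D f phi n)).
    { induction l as [|p l IH].
      - refine (Umon _ _ _ UT). intros _ _ _ [].
      - apply (Umon (fun x => D f p x /\ (forall phi, In phi l -> D f phi x))).
        + intros x [h1 h2] q [<-|hq]; auto.
        + apply UI; [apply Hl; left; auto|apply IH; intros; apply Hl; right; auto]. }
    destruct (Une _ H) as [n Hn]. exists (fun i => e (n i)). exact Hn.
  - exists c; exact Hc.
Qed.

Lemma a_real : forall phi : formula Sg N I, sat M e phi a <-> U (D e phi).
Proof.
  intro phi; split; intro h.
  - apply UB. exists phi; auto.
  - destruct (classic (sat M e phi a)) as [h'|h']; auto. exfalso.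
    assert (h2 : U (D e (fNot Sg N I phi))) by (apply UB; exists (fNot Sg N I phi); auto).
    destruct (Une _ (UI _ _ h h2)) as [n [h3 h4]]. exact (h4 h3).
Qed.


Variable b : I -> M.
Hypothesis b_real : forall phi : formula Sg N I, sat M e phi b <-> U (D e phi).

Definition X0 : Type := (N + (nat * I))%type.

Lemma hX0 : card_lt X0 K.
Proof.
  apply card_sum; auto. exists (fun p => Cantor.to_nat (fst p, code (snd p))).
  intros [j i] [j' i'] E.
  apply (f_equal Cantor.of_nat) in E. rewrite !Cantor.cancel_of_to in E. simpl in E.
  inversion E. f_equal. apply hcode; auto.
Qed.

Definition Hist (cs : nat -> I -> M) (j : nat) : I -> M :=
  match j with 0 => a | 1 => b | Datatypes.S (Datatypes.S j') => cs j' end.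

Definition fv0 (cs : nat -> I -> M) : X0 -> M :=
  fun s => match s with inl x => e x | inr (j, i) => Hist cs j i end.

Definition Rc (cs : nat -> I -> M) : I -> M :=
  proj1_sig (constructive_indefinite_description _ (realize_ex (fv0 cs) hX0)).

Lemma Rc_spec cs : realizes (fv0 cs) (Rc cs).
Proof. unfold Rc. destruct (constructive_indefinite_description _ _); auto. Qed.

Fixpoint CS (k : nat) : nat -> I -> M :=
  match k with
  | 0 => fun _ => a
  | Datatypes.S k' => fun j => if Nat.eq_dec j k' then Rc (CS k') else CS k' j
  end.

Definition c (k : nat) : I -> M := Rc (CS k).

Lemma CS_stable k : forall j, j < k -> CS k j = c j.
Proof.
  induction k; intros j h; [lia|]. simpl. destruct (Nat.eq_dec j k); [subst; auto|].
  apply IHk; lia.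
Qed.

Lemma Hist_agree k j : j < Datatypes.S (Datatypes.S k) -> Hist (CS k) j = Hist c j.
Proof.
  intro h. destruct j as [|[|j]]; simpl; auto. apply CS_stable; lia.
Qed.

Lemma c_realN k : forall phi : formula Sg N I, sat M e phi (c k) <-> U (D e phi).
Proof.
  intro phi.
  assert (H := realizes_iff _ _ (Rc_spec (CS k)) (fmap inl phi)).
  rewrite sat_fmap in H. unfold c. rewrite H.
  replace (D (fv0 (CS k)) (fmap inl phi)) with (D e phi); [tauto|].
  apply functional_extensionality; intro n. apply propositional_extensionality.
  unfold D. rewrite sat_fmap. tauto.
Qed.

Section Seq.
Variable ix : nat.
Hypothesis hix : ix < 2.
Hypothesis x_real : forall phi : formula Sg N I, sat M e phi (Hist c ix) <-> U (D e phi).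

Definition iota (j : nat) : nat := match j with 0 => ix | Datatypes.S j' => Datatypes.S (Datatypes.S j') end.
Definition sq (j : nat) : I -> M := Hist c (iota j).

Lemma sq_realN j : forall phi : formula Sg N I, sat M e phi (sq j) <-> U (D e phi).
Proof. destruct j; [exact x_real|apply c_realN]. Qed.

Definition val (n : nat) (G : nat -> I -> M) : {k | k < n} * I -> M :=
  fun ki => G (proj1_sig (fst ki)) (snd ki).

Definition Pn (n : nat) : Prop :=
  forall js : nat -> nat, (forall k l, k < l -> l < n -> js k < js l) ->
  forall phi : formula Sg N ({k | k < n} * I),
    sat M e phi (val n (fun k => sq (js k))) <-> sat M e phi (val n sq).

Lemma P0 : Pn 0.
Proof.
  intros js _ phi. replace (val 0 (fun k => sq (js k))) with (val 0 sq); [tauto|].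
  apply functional_extensionality; intros [[k h] i]; lia.
Qed.

Lemma P1 : Pn 1.
Proof.
  assert (G : forall js : nat -> nat, forall phi : formula Sg N ({k | k < 1} * I),
    sat M e phi (val 1 (fun k => sq (js k))) <->
    U (D e (fsub Sg phi I (fun ki => tvar (snd ki))))).
  { intros js phi. rewrite <- (sq_realN (js 0)). rewrite sat_fsub. simpl.
    replace (fun x : {k | k < 1} * I => sq (js 0) (snd x)) with (val 1 (fun k => sq (js k))); [tauto|].
    apply functional_extensionality; intros [[k h] i]. unfold val; simpl.
    replace k with 0 by lia. reflexivity. }
  intros js _ phi. rewrite (G js phi). rewrite (G (fun k => k) phi). tauto.
Qed.

Section Step.
Variable n : nat.
Hypothesis hn : 1 <= n.
Hypothesis IH : Pn n.
Variable phi : formula Sg N ({k | k < Datatypes.S n} * I).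

Definition mix (G : nat -> I -> M) (w : I -> M) : {k | k < Datatypes.S n} * I -> M :=
  fun ki => if lt_dec (proj1_sig (fst ki)) n then G (proj1_sig (fst ki)) (snd ki) else w (snd ki).

Definition phiA (js : nat -> nat) : formula Sg X0 I :=
  fsub Sg (fmap inl phi) I (fun ki => if lt_dec (proj1_sig (fst ki)) n
     then @tpar Sg X0 I (inr (iota (js (proj1_sig (fst ki))), snd ki)) else tvar (snd ki)).

Lemma LA js m' w : (forall k, k < n -> js k <= m') ->
  (sat M (fv0 (CS m')) (phiA js) w <-> sat M e phi (mix (fun k => sq (js k)) w)).
Proof.
  intro hjs. unfold phiA. rewrite sat_fsub, sat_fmap.
  match goal with |- sat _ _ _ ?v <-> _ => replace v with (mix (fun k => sq (js k)) w) end;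
    [tauto|].
  apply functional_extensionality; intros [[k h] i]. unfold mix; simpl.
  destruct (lt_dec k n) as [h'|h']; simpl; auto.
  unfold sq. apply (f_equal (fun F => F i)). symmetry; apply Hist_agree.
  specialize (hjs k h'). destruct (js k); simpl; lia.
Qed.

Definition phiB (n' : I -> N) : formula Sg N ({k | k < n} * I) :=
  fsub Sg phi ({k | k < n} * I) (fun ki => match lt_dec (proj1_sig (fst ki)) n with
     | left h => tvar (exist _ (proj1_sig (fst ki)) h, snd ki)
     | right _ => tpar (n' (snd ki)) end).

Lemma LB n' G : sat M e (phiB n') (val n G) <-> sat M e phi (mix G (fun i => e (n' i))).
Proof.
  unfold phiB. rewrite sat_fsub.
  match goal with |- sat _ _ _ ?v <-> _ => replace v with (mix G (fun i => e (n' i))) end;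
    [tauto|].
  apply functional_extensionality; intros [[k h] i]. unfold mix; simpl.
  destruct (lt_dec k n) as [h'|h']; simpl; auto.
Qed.

Lemma step_gen js : (forall k l, k < l -> l < Datatypes.S n -> js k < js l) ->
  sat M e phi (val (Datatypes.S n) (fun k => sq (js k))) <->
  U (fun n' => sat M e (phiB n') (val n sq)).
Proof.
  intro hjs.
  assert (hpos : js 0 < js n) by (apply hjs; lia).
  destruct (js n) as [|m'] eqn:Hm; [lia|].
  assert (hle : forall k, k < n -> js k <= m').
  { intros k hk. assert (js k < js n) by (apply hjs; lia). lia. }
  replace (val (Datatypes.S n) (fun k => sq (js k))) with (mix (fun k => sq (js k)) (c m')).
  2:{ apply functional_extensionality; intros [[k h] i]. unfold mix, val; simpl.
      destruct (lt_dec k n); auto. replace k with n by lia. rewrite Hm. reflexivity. }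
  rewrite <- (LA js m' (c m') hle).
  rewrite (realizes_iff _ _ (Rc_spec (CS m'))).
  replace (D (fv0 (CS m')) (phiA js)) with (fun n' => sat M e (phiB n') (val n sq)); [tauto|].
  apply functional_extensionality; intro n'. apply propositional_extensionality.
  unfold D. rewrite LA by auto. rewrite <- LB. symmetry. apply (IH js).
  intros k l hkl hl. apply hjs; lia.
Qed.

End Step.

Lemma Pn_all : forall n, Pn n.
Proof.
  induction n as [|n IHn]; [exact P0|].
  destruct n as [|n]; [exact P1|].
  intros js hjs phi.
  rewrite (step_gen (Datatypes.S n) ltac:(lia) IHn phi js hjs).
  rewrite (step_gen (Datatypes.S n) ltac:(lia) IHn phi (fun k => k) ltac:(intros; lia)).
  tauto.
Qed.

Lemma sq_indisc : indiscernible M I (J := nat) lt sq.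
Proof.
  intros n js ks hjs hks phi.
  set (ext := fun (fs : {k | k < n} -> nat) (k : nat) =>
         match lt_dec k n with left h => fs (exist _ k h) | right _ => 0 end).
  assert (Hext : forall fs, (fun ki : {k | k < n} * I => sq (fs (fst ki)) (snd ki)) =
                           val n (fun k => sq (ext fs k))).
  { intro fs. apply functional_extensionality; intros [[k h] i]. unfold val, ext; simpl.
    destruct (lt_dec k n) as [h'|h']; [|contradiction].
    rewrite (proof_irrelevance _ h h'). reflexivity. }
  assert (Hinc : forall fs : {k | k < n} -> nat, increasing lt fs ->
            forall k l, k < l -> l < n -> ext fs k < ext fs l).
  { intros fs hfs k l hkl hl. unfold ext.
    destruct (lt_dec k n) as [h1|h1]; [|lia]. destruct (lt_dec l n) as [h2|h2]; [|lia].
    apply hfs. simpl. auto. }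
  assert (Hnp : forall v, sat M noparam phi v <-> sat M e (fmap noparam phi) v).
  { intro v. rewrite sat_fmap.
    replace (fun x : Empty_set => e (noparam x)) with (@noparam M); [tauto|].
    apply functional_extensionality; intros []. }
  rewrite !Hnp, !Hext.
  rewrite (Pn_all n (ext js) (Hinc js hjs)), (Pn_all n (ext ks) (Hinc ks hks)). tauto.
Qed.

Lemma sq_equiv : lascar_equiv M I (sq 0) (sq 1).
Proof.
  destruct (classic (forall i, sq 0 i = sq 1 i)) as [h|h].
  - replace (sq 1) with (sq 0); [apply rt_refl|]. apply functional_extensionality; auto.
  - apply rt_step. split; auto.
    exists nat, lt, sq. split; [|split; [|split; [apply sq_indisc|split]]].
    + split; [|split]; [intros x; lia|intros; lia|intros x y; lia].
    + exists (fun k => k); auto.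
    + exists 0; auto.
    + exists 1; auto.
Qed.
End Seq.

Lemma lascar_edge_sym x y : lascar_edge M I x y -> lascar_edge M I y x.
Proof.
  intros [h [J [lt' [s [h1 [h2 [h3 [[j1 hj1] [j2 hj2]]]]]]]]].
  split; [intro h'; apply h; intro i; auto|].
  exists J, lt', s. split; [auto|split; [auto|split; [auto|split]]]; eauto.
Qed.

Lemma lascar_equiv_sym x y : lascar_equiv M I x y -> lascar_equiv M I y x.
Proof.
  induction 1; [apply rt_step, lascar_edge_sym; auto|apply rt_refl|eapply rt_trans; eauto].
Qed.

Lemma a_b_equiv : lascar_equiv M I a b.
Proof.
  assert (Ha := sq_equiv 0 ltac:(lia) (a_real)).
  assert (Hb := sq_equiv 1 ltac:(lia) b_real).
  unfold sq, iota in Ha, Hb. simpl in Ha, Hb.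
  eapply rt_trans; [exact Ha|]. apply lascar_equiv_sym; exact Hb.
Qed.
End F.

Section G.
Variables (Sg : signature) (M : structure Sg) (K : Type) (I : Type).
Hypothesis hM : monster M K.
Hypothesis hI : countable I.

Lemma autf_aut s : autf M K s -> automorphism M s.
Proof.
  induction 1 as [s hs _| |s t _ [[s' [h1 h2]] [hf hr]] _ [[t' [h3 h4]] [hf' hr']]|s t _ [[s' [h1 h2]] [hf hr]] hts hst].
  - exact hs.
  - split; [exists (fun x => x); auto|split; [auto|intros; tauto]].
  - split; [exists (fun x => t' (s' x)); split; intros; [rewrite h1; auto|rewrite h4; auto]|split].
    + intros f args. rewrite hf', hf. reflexivity.
    + intros r args. rewrite hr'. rewrite (hr r (fun k => t (args k))). tauto.
  - split; [exists s; auto|split].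
    + intros f args. rewrite <- (hts (t (finterp M f args))) at 1.
      rewrite <- (hts (finterp M f (fun k => t (args k)))). f_equal.
      rewrite hst, hf. f_equal. apply functional_extensionality; intro k; rewrite hst; auto.
    + intros r args. rewrite (hr r (fun k => t (args k))).
      replace (fun k => s (t (args k))) with args; [tauto|].
      apply functional_extensionality; intro; rewrite hst; auto.
Qed.

Lemma gen_lascar s : automorphism M s -> fixes_small_model M K s ->
  forall x : I -> M, lascar_equiv M I x (fun i => s (x i)).
Proof.
  intros hs [N [e [he [hNK hfix]]]] x.
  destruct hM as [[m0] [hB [hsat _]]].
  destruct hI as [code hcode].
  destruct (ultra_exists (I -> N) (Bset Sg M I N e x) (Bset_fip Sg M I code hcode m0 N e he x))
    as [U [UB [UI [Une [Uult Umon]]]]].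
  apply (a_b_equiv Sg M K hsat hB I code hcode m0 N e hNK x U UB UI Une Uult Umon).
  intro phi. rewrite <- (a_real Sg M I N e x U UB UI Une); auto.
  rewrite <- (sat_aut Sg M s hs e phi x).
  replace (fun y => s (e y)) with e; [tauto|].
  apply functional_extensionality; intro y; auto.
Qed.

Lemma autf_lascar s : autf M K s -> forall x : I -> M, lascar_equiv M I x (fun i => s (x i)).
Proof.
  induction 1 as [s hs hfx| |s t _ IHs _ IHt|s t hs IHs hts hst]; intro x.
  - apply gen_lascar; auto.
  - apply rt_refl.
  - eapply rt_trans; [apply IHt|apply (IHs (fun i => t (x i)))].
  - apply lascar_equiv_sym. specialize (IHs (fun i => t (x i))).
    assert (E : (fun i => s (t (x i))) = x) by (apply functional_extensionality; intro; rewrite hst; auto).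
    simpl in IHs. rewrite E in IHs. exact IHs.
Qed.

Variable C : (I -> M) -> Prop.
Hypothesis hC : lascar_class M I C.

Lemma transfer (A B' : formula Sg M I) :
  (forall c, C c -> sat M (fun x => x) A c -> sat M (fun x => x) B' c) ->
  generic M K I C A -> generic M K I C B'.
Proof.
  intros hAB [l [hl hcov]]. exists l; split; auto.
  intros c hc. specialize (hcov c hc). apply sat_bigOr in hcov.
  destruct hcov as [f [hf hs]]. apply in_map_iff in hf. destruct hf as [s [<- hsl]].
  apply sat_bigOr. exists (fmap s B'). split; [apply (in_map (fun s0 => fmap s0 B')); auto|].
  assert (has := autf_aut s (hl s hsl)).
  destruct has as [[t [hts hst]] _].
  assert (Ct : C (fun i => t (c i))).
  { destruct hC as [a0 ha0]. apply ha0. apply ha0 in hc.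
    eapply rt_trans; [exact hc|]. apply lascar_equiv_sym.
    assert (E : (fun i => s (t (c i))) = c) by (apply functional_extensionality; intro; auto).
    pose proof (autf_lascar s (hl s hsl) (fun i => t (c i))) as H. simpl in H.
    rewrite E in H. exact H. }
  rewrite sat_fmap in hs |- *.
  replace c with (fun i => s (t (c i))) in hs |- * by (apply functional_extensionality; intro; auto).
  apply (sat_aut Sg M s (autf_aut s (hl s hsl)) (fun x => x)).
  apply hAB; auto.
  apply (sat_aut Sg M s (autf_aut s (hl s hsl)) (fun x => x)) in hs. exact hs.
Qed.

Lemma proper_of (q : formula Sg M I -> Prop) (w : formula Sg M I) :
  ~ generic M K I C w ->
  (forall l, (forall phi, In phi l -> q phi) -> generic M K I C (fOr (bigAnd l) w)) ->
  proper_wit M K I C q w.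
Proof.
  intros hw hl. split; [|split; auto].
  intros l Hl. destruct (classic (exists c, sat M (fun x => x) (bigAnd l) c)) as [[c hc]|h].
  - exists c. apply sat_bigAnd; auto.
  - exfalso. apply hw. apply (transfer (fOr (bigAnd l) w)); [|apply hl; auto].
    intros c _ [h1|h1]; auto. exfalso; apply h; eauto.
Qed.

End G.

Lemma split_list (Sg : signature) (M : structure Sg) {I} (p : formula Sg M I -> Prop) (psi0 : formula Sg M I)
  (l : list (formula Sg M I)) :
  (forall phi, In phi l -> p phi \/ phi = psi0) ->
  exists lp, (forall phi, In phi lp -> p phi) /\
    forall v, sat M (fun x => x) (bigAnd lp) v -> sat M (fun x => x) psi0 v ->
              sat M (fun x => x) (bigAnd l) v.
Proof.
  induction l as [|f l IH]; intro H.
  - exists []; split; [intros _ []|]. intros; simpl; auto.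
  - destruct IH as [lp [H1 H2]]; [intros; apply H; right; auto|].
    destruct (H f (or_introl eq_refl)) as [hf| ->].
    + exists (f :: lp); split; [intros q [<-|hq]; auto|].
      intros v [h1 h2] h3. simpl. split; auto.
    + exists lp; split; auto. intros v h1 h2. simpl; split; auto.
Qed.

Theorem lemma4p8 (S : signature) (M : structure S) (K : Type) (I : Type)
  (hS : countable_signature S) (hM : monster M K) (hI : countable I)
  (C : (I -> M) -> Prop) (hC : lascar_class M I C)
  (p : formula S M I -> Prop) (psi : formula S M I)
  (hp : proper_wit M K I C p psi)
  (n : nat) (phi : nat -> formula S M I) (psi' : formula S M I)
  (hcov : covers M I C (fOr (bigOr (map phi (seq 0 n))) psi'))
  (hng : ~ generic M K I C (fOr psi' psi)) :
  exists i, i < n /\ proper M K I C (fun theta => p theta \/ theta = phi i).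
Proof.
  apply NNPP. intro Hno.
  destruct hp as [_ [hpsi hpl]].
  set (chi := fun (L : list (formula S M I)) k =>
     fOr psi' (fOr psi (bigOr (map (fun i => fAnd (bigAnd L) (phi i)) (seq 0 k))))).
  assert (Hsat : forall L k v, sat M (fun x => x) (chi L k) v <->
     sat M (fun x => x) psi' v \/ sat M (fun x => x) psi v \/
     exists i, i < k /\ sat M (fun x => x) (bigAnd L) v /\ sat M (fun x => x) (phi i) v).
  { intros L k v. unfold chi. simpl. rewrite sat_bigOr. split.
    - intros [h|[h|[f [hf hs]]]]; auto. right; right.
      apply in_map_iff in hf. destruct hf as [i [<- hi]]. apply in_seq in hi.
      exists i. destruct hs; split; [lia|auto].
    - intros [h|[h|[i [hi [h1 h2]]]]]; auto. right; right.
      exists (fAnd (bigAnd L) (phi i)). split; [|simpl; auto].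
      apply (in_map (fun i => fAnd (bigAnd L) (phi i))). apply in_seq. lia. }
  assert (Hind : forall k, k <= n -> exists L, (forall f, In f L -> p f) /\ ~ generic M K I C (chi L k)).
  { induction k as [|k IHk]; intro hk.
    - exists []. split; [intros _ []|]. intro hg. apply hng.
      apply (transfer S M K I hM hI C hC (chi [] 0)); auto.
      intros c _ hs. apply Hsat in hs. simpl.
      destruct hs as [h|[h|[i [hi _]]]]; auto; lia.
    - destruct (IHk ltac:(lia)) as [L [HL HnL]].
      assert (Hnp : ~ proper_wit M K I C (fun theta => p theta \/ theta = phi k) (chi L k)).
      { intro h. apply Hno. exists k; split; [lia|]. exists (chi L k); auto. }
      assert (Hex : exists l, (forall f, In f l -> p f \/ f = phi k) /\
                      ~ generic M K I C (fOr (bigAnd l) (chi L k))).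
      { apply NNPP. intro h. apply Hnp. apply proper_of; auto.
        intros l hl. apply NNPP. intro h'. apply h. eauto. }
      destruct Hex as [l [hl hng']].
      destruct (split_list S M p (phi k) l hl) as [lp [hlp hsub]].
      exists (L ++ lp). split.
      + intros f hf; apply in_app_or in hf; destruct hf; auto.
      + intro hg. apply hng'.
        apply (transfer S M K I hM hI C hC (chi (L ++ lp) (Datatypes.S k))); auto.
        intros c _ hs. apply Hsat in hs. simpl.
        assert (HA : sat M (fun x => x) (bigAnd (L ++ lp)) c ->
                     sat M (fun x => x) (bigAnd L) c /\ sat M (fun x => x) (bigAnd lp) c).
        { intro h. rewrite sat_bigAnd in h. split; apply sat_bigAnd; intros; apply h;
            apply in_or_app; auto. }
        destruct hs as [h|[h|[i [hi [h1 h2]]]]].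
        * right. apply Hsat; auto.
        * right. apply Hsat; auto.
        * destruct (HA h1) as [h3 h4].
          destruct (Nat.eq_dec i k) as [->|hik].
          -- left. apply hsub; auto.
          -- right. apply Hsat. right; right. exists i; split; [lia|auto]. }
  destruct (Hind n (le_n n)) as [L [HL HnL]].
  apply HnL.
  apply (transfer S M K I hM hI C hC (fOr (bigAnd L) psi)); [|apply hpl; auto].
  intros c hc [h|h]; apply Hsat; auto.
  destruct (hcov c hc) as [h1|h1]; auto.
  apply sat_bigOr in h1. destruct h1 as [f [hf hs]].
  apply in_map_iff in hf. destruct hf as [i [<- hi]]. apply in_seq in hi.
  right; right. exists i; split; [lia|auto].
Qed.
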